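(* Let $\Gamma$ be a non-empty set and $1<p\le 2$. Then $FBL[\ell_p(\Gamma)]$ contains a closed subspace isomorphic to $\ell_1(\Gamma)$.
   Context: For a real Banach space $E$ with dual $E^*$ and closed unit ball $B_E$, let $H[E]$ be the vector space of all positively homogeneous functions $f:E^*\to\mathbb R$ ($f(\lambda x^* )=\lambda f(x^* )$ for $\lambda>0$). For $f\in H[E]$ put $\|f\|_{FBL[E]}:=\sup\{\sum_{k=1}^n|f(x_k^* )| : n\in\mathbb N,\ x_1^*,\dots,x_n^*\in E^*,\ \sup_{x\in B_E}\sum_{k=1}^n|x_k^*(x)|\le 1\}$. $H_0[E]:=\{f\in H[E]:\|f\|_{FBL[E]}<\infty\}$ is a Banach lattice with this norm and pointwise order/operations. For $x\in E$ let $\delta_x(x^* )=x^*(x)$. $FBL[E]$ is the closed sublattice of $H_0[E]$ generated by $\{\delta_x:x\in E\}$. *)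

(* Defs.v *)
From HB Require Import structures.
From mathcomp Require Import all_boot all_order all_algebra.
From mathcomp Require Import all_classical all_reals all_analysis.
Set Implicit Arguments. Unset Strict Implicit. Unset Printing Implicit Defensive.
Import Order.TTheory GRing.Theory Num.Theory.
Local Open Scope classical_set_scope.
Local Open Scope ring_scope.

Section FBL.
Context {R : realType} {G : choiceType}.

(* Elements of E = l_p(G) are functions G -> R with sum_g |x g|^p finite. *)
Definition lp_sum (p : R) (x : G -> R) (s : seq G) : R :=
  \sum_(g <- s) (`|x g| `^ p).

Definition in_lp (p : R) (x : G -> R) : Prop :=
  exists M : R, forall s : seq G, uniq s -> lp_sum p x s <= M.

Definition in_lp_ball (p : R) (x : G -> R) : Prop :=
  forall s : seq G, uniq s -> lp_sum p x s <= 1.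

(* Elements of the dual E^* : bounded linear functionals on l_p(G),
   represented canonically as functions on G -> R vanishing outside l_p(G). *)
Definition is_dual_lp (p : R) (phi : (G -> R) -> R) : Prop :=
  [/\ (forall x y, in_lp p x -> in_lp p y ->
         phi (fun g => x g + y g) = phi x + phi y),
      (forall (a : R) x, in_lp p x -> phi (fun g => a * x g) = a * phi x),
      (exists C : R, forall x, in_lp_ball p x -> `|phi x| <= C) &
      (forall x, ~ in_lp p x -> phi x = 0)].

Definition admissible (p : R) (xs : seq ((G -> R) -> R)) : Prop :=
  (forall phi, phi \in xs -> is_dual_lp p phi) /\
  (forall x, in_lp_ball p x -> \sum_(phi <- xs) `|phi x| <= 1).

Definition fbl_norm (p : R) (f : ((G -> R) -> R) -> R) : \bar R :=
  ereal_sup [set (\sum_(phi <- xs) `|f phi|)%:E | xs in admissible p].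

Definition pos_homog (p : R) (f : ((G -> R) -> R) -> R) : Prop :=
  forall phi, is_dual_lp p phi ->
    forall l : R, 0 < l -> f (fun x => l * phi x) = l * f phi.

Definition in_H0 (p : R) (f : ((G -> R) -> R) -> R) : Prop :=
  pos_homog p f /\ (fbl_norm p f < +oo)%E.

Definition delta (x : G -> R) : ((G -> R) -> R) -> R := fun phi => phi x.

Definition closed_sublattice_with_deltas (p : R)
    (S : set (((G -> R) -> R) -> R)) : Prop :=
  (forall f, S f -> in_H0 p f) /\
  [/\ (forall x, in_lp p x -> S (delta x)),
      (forall f g, S f -> S g -> S (fun phi => f phi + g phi)),
      (forall (a : R) f, S f -> S (fun phi => a * f phi)),
      (forall f g, S f -> S g -> S (fun phi => Num.max (f phi) (g phi))) &
      (forall f, in_H0 p f ->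
         (forall e : R, 0 < e -> exists g, S g /\
            (fbl_norm p (fun phi => (f phi - g phi)%R) <= e%:E)%E) -> S f)].

Definition FBL (p : R) : set (((G -> R) -> R) -> R) :=
  [set f | forall S, closed_sublattice_with_deltas p S -> S f].

Definition l1_norm (a : G -> R) : \bar R :=
  ereal_sup [set (\sum_(g <- s) `|a g|)%:E | s in [set s : seq G | uniq s]].

Definition in_l1 (a : G -> R) : Prop := (l1_norm a < +oo)%E.

End FBL.

(* Main.v *)
Require Import Defs.
From HB Require Import structures.
From mathcomp Require Import all_boot all_order all_algebra.
From mathcomp Require Import all_classical all_reals all_analysis.
From mathcomp Require Import ring lra.
Import Order.TTheory GRing.Theory Num.Theory.
Local Open Scope classical_set_scope.
Local Open Scope ring_scope.

Section Aux.
Context {R : realType} {G : choiceType} (p : R) (hp1 : 1 < p) (hp2 : p <= 2).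
Implicit Types (x y z a b : G -> R).

Definition l1b (z : G -> R) (L : R) := forall s : seq G, uniq s -> \sum_(g <- s) `|z g| <= L.

Definition ev_e (h : G) : G -> R := fun g => if g == h then 1 else 0.

Lemma p_gt0 : 0 < p. Proof. by apply: lt_trans hp1. Qed.
Lemma p_neq0 : p != 0. Proof. by rewrite gt_eqF // p_gt0. Qed.

Lemma lp_scale x (c : R) : in_lp p x -> in_lp p (fun g => c * x g).
Proof.
move=> [M HM]; exists (`|c| `^ p * M) => s us.
rewrite /lp_sum.
under eq_bigr => g _ do rewrite normrM powRM //.
rewrite -mulr_sumr ler_wpM2l ?powR_ge0 //; exact: HM.
Qed.

Lemma lp_add x y : in_lp p x -> in_lp p y -> in_lp p (fun g => x g + y g).
Proof.
move=> [M HM] [N HN]; exists (2 `^ p * (M + N)) => s us.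
apply: (@le_trans _ _ (2 `^ p * (lp_sum p x s + lp_sum p y s))); last first.
  by rewrite ler_wpM2l ?powR_ge0 // lerD ?HM ?HN.
rewrite /lp_sum -big_split mulr_sumr /=; apply: ler_sum => g _.
have h : `|x g + y g| <= 2 * Num.max `|x g| `|y g|.
  apply: (le_trans (ler_normD _ _)).
  by rewrite mulr2n mulrDl mul1r lerD // ?le_max lexx ?orbT.
apply: (@le_trans _ _ ((2 * Num.max `|x g| `|y g|) `^ p)).
  apply: ge0_ler_powR => //; rewrite ?nnegrE ?(ltW p_gt0) // mulr_ge0 // le_max normr_ge0.
rewrite powRM // ?le_max ?normr_ge0 // ler_wpM2l ?powR_ge0 //.
case: (leP `|x g| `|y g|) => _.
  by rewrite lerDr powR_ge0.
by rewrite lerDl powR_ge0.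
Qed.

Lemma ball_lp x : in_lp_ball p x -> in_lp p x.
Proof. by move=> H; exists 1. Qed.

Lemma ball_coord x g : in_lp_ball p x -> `|x g| <= 1.
Proof.
move=> H; have := H [:: g] isT; rewrite /lp_sum big_seq1 => H1.
rewrite leNgt; apply/negP => H2.
have := le1r_powR (ltW H2) (ltW hp1); rewrite leNgt => /negP; apply.
exact: (le_lt_trans H1 H2).
Qed.

Lemma powp_le (t : R) : 0 <= t <= 1 -> t `^ p <= t.
Proof.
case/andP => t0 t1; have [->|tn0] := eqVneq t 0; first by rewrite powR0 ?p_neq0.
by apply: ge1r_powR; rewrite ?(ltW hp1) // t1 lt_def tn0 t0.
Qed.

Lemma sq_le_powp (t : R) : 0 <= t <= 1 -> t ^+ 2 <= t `^ p.
Proof.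
case/andP => t0 t1; have [->|tn0] := eqVneq t 0; first by rewrite expr0n /= powR_ge0.
have tp : 0 < t by rewrite lt_def tn0 t0.
rewrite -powR_mulrn // (_ : 2%:R = p * (2 / p)); last first.
  by rewrite mulrC -mulrA mulVf ?p_neq0 // mulr1.
rewrite powRrM; apply: ge1r_powR.
  by rewrite powR_gt0 //= (le_trans (@powp_le t _)) // t0 t1.
by rewrite ler_pdivlMr ?p_gt0 // mul1r.
Qed.

Lemma l1b_ball z : l1b z 1 -> in_lp_ball p z.
Proof.
move=> H s us; apply: (le_trans _ (H s us)); rewrite /lp_sum; apply: ler_sum => g _.
apply: powp_le; rewrite normr_ge0 /=.
have := H [:: g] isT; by rewrite big_seq1.
Qed.

Lemma l1b_ge0 z L : l1b z L -> 0 <= L.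
Proof. by move=> H; have := H [::] isT; rewrite big_nil. Qed.

Lemma l1b_lp z L : l1b z L -> in_lp p z.
Proof.
move=> H; have L0 := @l1b_ge0 z L H.
have Lp : 0 < L + 1 by rewrite ltr_wpDl.
have : in_lp p (fun g => (L + 1) * ((L + 1)^-1 * z g)).
  have Li : 0 <= (L+1)^-1 by rewrite invr_ge0 ltW.
  apply: lp_scale; apply: ball_lp; apply: l1b_ball => s us.
  under eq_bigr => g _ do rewrite normrM (ger0_norm Li).
  rewrite -mulr_sumr ler_pdivrMl // mulr1 (le_trans (H s us)) //.
  by rewrite lerDl.
by congr in_lp; apply/funext => g; rewrite mulrA mulfV ?gt_eqF // mul1r.
Qed.

Lemma ball_sq x s : in_lp_ball p x -> uniq s -> \sum_(g <- s) (x g) ^+ 2 <= 1.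
Proof.
move=> H us; apply: le_trans (H s us); rewrite /lp_sum; apply: ler_sum => g _.
by rewrite -real_normK ?num_real // sq_le_powp // normr_ge0 ball_coord.
Qed.

Lemma sum_ind (F : G -> R) h s : uniq s ->
  \sum_(g <- s) F g * ev_e h g = if h \in s then F h else 0.
Proof.
elim: s => [|x s IH]; first by rewrite big_nil.
rewrite /= big_cons in_cons => /andP [xs us]; rewrite IH // /ev_e.
case: (eqVneq x h) => [<-|xh] /=.
  by rewrite (negbTE xs) mulr1 addr0.
by rewrite mulr0 add0r; case: ifP => //; rewrite (negbTE xh).
Qed.

Lemma ev_sym h g : ev_e h g = ev_e g h.
Proof. by rewrite /ev_e eq_sym. Qed.

Lemma e_l1b h : l1b (ev_e h) 1.
Proof.
move=> s us.
have -> : \sum_(g <- s) `|ev_e h g| = \sum_(g <- s) 1 * ev_e h g.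
  by apply: eq_bigr => g _; rewrite mul1r /ev_e; case: ifP; rewrite ?normr1 ?normr0.
by rewrite sum_ind //; case: ifP.
Qed.

Lemma e_lp h : in_lp p (ev_e h).
Proof. exact: l1b_lp (e_l1b h). Qed.
Lemma e_ball h : in_lp_ball p (ev_e h).
Proof. exact: l1b_ball (e_l1b h). Qed.


Definition lin (s : seq G) (w : G -> R) : (G -> R) -> R :=
  fun x => if `[< in_lp p x >] then \sum_(g <- s) w g * x g else 0.

Lemma lin_dual s w : is_dual_lp p (lin s w).
Proof.
split.
- move=> x y hx hy; rewrite /lin !asboolT //; last exact: lp_add.
  by rewrite -big_split; apply: eq_bigr => g _; rewrite mulrDr.
- move=> c x hx; rewrite /lin !asboolT //; last exact: lp_scale.
  by rewrite mulr_sumr; apply: eq_bigr => g _; rewrite mulrCA.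
- exists (\sum_(g <- s) `|w g|) => x hx; rewrite /lin asboolT; last exact: ball_lp.
  apply: (le_trans (ler_norm_sum _ _ _)); apply: ler_sum => g _.
  by rewrite normrM ler_piMr // ball_coord.
- by move=> x hx; rewrite /lin asboolF.
Qed.

Lemma dual_scale phi (l : R) : is_dual_lp p phi -> is_dual_lp p (fun x => l * phi x).
Proof.
case=> hadd hsc [C hC] hz; split.
- by move=> x y hx hy; rewrite hadd // mulrDr.
- by move=> c x hx; rewrite hsc // mulrCA.
- exists (`|l| * C) => x hx; rewrite normrM ler_wpM2l //; exact: hC.
- by move=> x hx; rewrite hz // mulr0.
Qed.

Lemma norm_sg_le1 (v : R) : `|Num.sg v| <= 1.
Proof. by rewrite normr_sg; case: (v != 0). Qed.

Lemma l1b_mul a c L : l1b a L -> (forall g, `|c g| <= 1) -> l1b (fun g => a g * c g) L.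
Proof.
move=> H hc s us; apply: le_trans (H s us); apply: ler_sum => g _.
by rewrite normrM ler_piMr.
Qed.

Lemma l1b_le a b L : l1b a L -> (forall g, `|b g| <= `|a g|) -> l1b b L.
Proof. by move=> H hb s us; apply: le_trans (H s us); apply: ler_sum. Qed.

Lemma lp0 : in_lp p (fun _ : G => 0).
Proof.
exists 0 => s _; rewrite /lp_sum big1 // => g _; by rewrite normr0 powR0 ?p_neq0.
Qed.

Lemma dual_lc phi (c : G -> R) s : is_dual_lp p phi ->
  in_lp p (fun g => \sum_(h <- s) c h * ev_e h g) /\
  phi (fun g => \sum_(h <- s) c h * ev_e h g) = \sum_(h <- s) c h * phi (ev_e h).
Proof.
case=> hadd hsc _ hz; elim: s => [|h s [IH1 IH2]].
  have -> : (fun g : G => \sum_(h <- [::]) c h * ev_e h g) = (fun g => 0 * 0).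
    by apply/funext => g; rewrite big_nil mulr0.
  rewrite hsc; last exact: lp0.
  split; first by apply: lp_scale; exact: lp0.
  by rewrite mul0r big_nil.
have -> : (fun g : G => \sum_(k <- h :: s) c k * ev_e k g) =
          (fun g => c h * ev_e h g + \sum_(k <- s) c k * ev_e k g).
  by apply/funext => g; rewrite big_cons.
have l1 : in_lp p (fun g => c h * ev_e h g) by apply: lp_scale; apply: e_lp.
split; first exact: lp_add.
rewrite big_cons hadd // IH2 hsc //; exact: e_lp.
Qed.


Definition Tm a : ((G -> R) -> R) -> R := fun phi =>
  if `[< is_dual_lp p phi >] then phi (fun g => a g * Num.sg (phi (ev_e g))) else 0.

Definition tail (s : seq G) a : G -> R := fun g => if g \in s then 0 else a g.

Lemma sg_mul_self (v : R) : Num.sg v * v = `|v|.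
Proof.
have [v0|v0|->] := ltrgtP v 0.
- by rewrite ltr0_sg // ltr0_norm // mulN1r.
- by rewrite gtr0_sg // gtr0_norm // mul1r.
- by rewrite mulr0 normr0.
Qed.

Lemma Tm_decomp phi a L s : is_dual_lp p phi -> l1b a L -> uniq s ->
  Tm a phi = \sum_(h <- s) a h * `|phi (ev_e h)| + Tm (tail s a) phi.
Proof.
move=> hd ha us; rewrite /Tm asboolT //.
have [hadd _ _ _] := hd.
pose c := fun h => a h * Num.sg (phi (ev_e h)).
have [lc1 lc2] := @dual_lc phi c s hd.
have ht : in_lp p (fun g => tail s a g * Num.sg (phi (ev_e g))).
  apply: (@l1b_lp _ L); apply: l1b_mul; last by move=> g; exact: norm_sg_le1.
  apply: (@l1b_le a _ L ha) => g; rewrite /tail; case: ifP => _; by rewrite ?normr0 ?normr_ge0.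
have -> : (fun g => a g * Num.sg (phi (ev_e g))) =
   (fun g => (\sum_(h <- s) c h * ev_e h g) + tail s a g * Num.sg (phi (ev_e g))).
  apply/funext => g; under eq_bigr => h _ do rewrite ev_sym.
  rewrite sum_ind // /tail /c; case: ifP => _; by rewrite ?mul0r ?addr0 ?add0r.
rewrite hadd // lc2; congr (_ + _); apply: eq_bigr => h _.
by rewrite /c -mulrA sg_mul_self.
Qed.

Lemma tail_small a L (d : R) : l1b a L -> 0 < d -> exists2 s, uniq s & l1b (tail s a) d.
Proof.
move=> ha d0.
pose S := [set (\sum_(g <- s) `|a g|)%:E | s in [set s : seq G | uniq s]].
have supL : (ereal_sup S <= L%:E)%E.
  by apply: ge_ereal_sup => _ [s us <-]; rewrite lee_fin; exact: ha.
have sup0 : (0%:E <= ereal_sup S)%E.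
  by apply: ereal_sup_ubound; exists [::] => //; rewrite big_nil.
have fin : ereal_sup S \is a fin_num.
  by rewrite ge0_fin_numE // (le_lt_trans supL) ?ltry.
have [_ [s us <-] hs] := ub_ereal_sup_adherent d0 fin.
exists s => // s' us'.
pose f := [seq g <- s' | g \notin s].
have usf : uniq (s ++ f).
  rewrite cat_uniq us filter_uniq // andbT /=; apply/hasPn => g.
  by rewrite mem_filter; case/andP.
have bnd : ((\sum_(g <- s ++ f) `|a g|)%:E <= ereal_sup S)%E.
  by apply: ereal_sup_ubound; exists (s ++ f).
rewrite -(fineK fin) lee_fin big_cat /= in bnd.
rewrite -(fineK fin) -EFinD lte_fin in hs.
have -> : \sum_(g <- s') `|tail s a g| = \sum_(g <- f) `|a g|.
  rewrite big_filter [in RHS]big_mkcond /=; apply: eq_bigr => g _.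
  by rewrite /tail; case: ifP => _ /=; rewrite ?normr0.
lra.
Qed.

Lemma mem_le_sum (T : eqType) (xs : seq T) (F : T -> R) (u : T) :
  (forall v, 0 <= F v) -> u \in xs -> F u <= \sum_(v <- xs) F v.
Proof.
move=> F0; elim: xs => [|v xs IH] //; rewrite in_cons big_cons.
case/orP => [/eqP->|hx]; first by rewrite lerDl sumr_ge0.
by rewrite (le_trans (IH hx)) // lerDr.
Qed.

Lemma sum_le_const (T : eqType) (xs : seq T) (F : T -> R) c :
  (forall u, u \in xs -> F u <= c) -> \sum_(u <- xs) F u <= c * (size xs)%:R.
Proof.
elim: xs => [|y xs IH] H; first by rewrite big_nil mulr0.
rewrite big_cons /= -add1n natrD mulrDr mulr1 lerD //.
  by apply: H; rewrite in_cons eqxx.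
by apply: IH => u hu; apply: H; rewrite in_cons hu orbT.
Qed.

Lemma small_val xs phi z (d : R) : admissible p xs -> phi \in xs -> l1b z d -> 0 < d ->
  `|phi z| <= d.
Proof.
case=> hd hs phx hz d0.
have [_ hsc _ _] := hd phi phx.
have di : 0 <= d^-1 by rewrite invr_ge0 ltW.
have zb : in_lp_ball p (fun g => d^-1 * z g).
  apply: l1b_ball => s us.
  under eq_bigr => g _ do rewrite normrM (ger0_norm di).
  by rewrite -mulr_sumr ler_pdivrMl // mulr1; exact: hz.
have h1 := @mem_le_sum _ xs (fun psi => `|psi (fun g => d^-1 * z g)|) phi (fun _ => normr_ge0 _) phx.
have h2 := le_trans h1 (hs _ zb).
have -> : z = (fun g => d * (d^-1 * z g)).
  by apply/funext => g; rewrite mulrA mulfV ?gt_eqF // mul1r.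
rewrite hsc; last exact: ball_lp.
by rewrite normrM (gtr0_norm d0) ler_piMr // ltW.
Qed.

Lemma Tm_upper xs a L : admissible p xs -> l1b a L -> \sum_(phi <- xs) `|Tm a phi| <= L.
Proof.
move=> hxs ha; apply/ler_addgt0Pr => e e0.
pose m := size xs.
pose d := e / (m%:R + 1).
have m1 : 0 < m%:R + 1 :> R by rewrite ltr_wpDl.
have d0 : 0 < d by rewrite divr_gt0.
have [s us ht] := @tail_small a L d ha d0.
have [hd hs] := hxs.
rewrite (eq_big_seq (fun phi => `|\sum_(h <- s) a h * `|phi (ev_e h)| + Tm (tail s a) phi|));
  last by move=> phi hphi; rewrite (@Tm_decomp phi a L s (hd _ hphi) ha us).
apply: le_trans (ler_sum _ (fun phi _ => ler_normD _ _)) _.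
rewrite big_split /=; apply: lerD.
  apply: (@le_trans _ _ (\sum_(phi <- xs) \sum_(h <- s) `|a h| * `|phi (ev_e h)|)).
    apply: ler_sum => phi _; apply: le_trans (ler_norm_sum _ _ _) _.
    by apply: ler_sum => h _; rewrite normrM normr_id.
  rewrite exchange_big /=; apply: le_trans (ha s us); apply: ler_sum => h _.
  rewrite -mulr_sumr; apply: ler_piMr; first exact: normr_ge0.
  exact: (hs _ (e_ball h)).
apply: (@le_trans _ _ (d * m%:R)).
  apply: sum_le_const => phi hphi.
  rewrite /Tm asboolT; last exact: hd.
  apply: (@small_val xs phi _ d hxs hphi _ d0).
  by apply: l1b_mul ht _ => g; exact: norm_sg_le1.
by rewrite /d mulrAC ler_pdivrMr // ler_pM2l // lerDl ler01.
Qed.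


Fixpoint sgnsum (F : R -> R) (xs : seq R) (c : R) : R :=
  match xs with
  | [::] => F c
  | x0 :: xs' => sgnsum F xs' (c + x0) + sgnsum F xs' (c - x0)
  end.

Lemma sgnsum_sq xs c : sgnsum (fun t => t ^+ 2) xs c =
  2 ^+ (size xs) * (c ^+ 2 + \sum_(x0 <- xs) x0 ^+ 2).
Proof.
elim: xs c => [|x0 xs IH] c /=; first by rewrite big_nil expr0 mul1r addr0.
rewrite !IH big_cons [2 ^+ (size xs).+1]exprS; ring.
Qed.

Lemma sgnsum_abs_ge0 xs c : 0 <= sgnsum Num.norm xs c.
Proof. by elim: xs c => [|x0 xs IH] c /=; rewrite ?addr_ge0. Qed.

Lemma sgnsum_abs_sq xs c :
  (sgnsum Num.norm xs c) ^+ 2 <= 2 ^+ (size xs) * sgnsum (fun t => t ^+ 2) xs c.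
Proof.
elim: xs c => [|x0 xs IH] c /=; first by rewrite expr0 mul1r real_normK ?num_real.
set A := sgnsum Num.norm xs (c + x0); set B := sgnsum Num.norm xs (c - x0).
have h1 := IH (c + x0); have h2 := IH (c - x0).
have := sqr_ge0 (A - B).
have -> : (A + B) ^+ 2 = 2 * (A ^+ 2 + B ^+ 2) - (A - B) ^+ 2 by ring.
move=> hAB; apply: (@le_trans _ _ (2 * (A ^+ 2 + B ^+ 2))); first lra.
rewrite [2 ^+ (size xs).+1]exprS -mulrA ler_wpM2l // mulrDr.
exact: lerD.
Qed.

Fixpoint sigs (gs : seq G) : seq (G -> R) :=
  match gs with
  | [::] => [:: fun _ => 1]
  | g :: gs' => [seq (fun h => if h == g then 1 else sg h) | sg <- sigs gs'] ++
                [seq (fun h => if h == g then -1 else sg h) | sg <- sigs gs']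
  end.

Lemma size_sigs gs : size (sigs gs) = (2 ^ size gs)%N.
Proof. by elim: gs => [|g gs IH] //=; rewrite size_cat !size_map IH expnS mul2n addnn. Qed.

Lemma sigs_pm gs sg h : sg \in sigs gs -> sg h = 1 \/ sg h = -1.
Proof.
elim: gs sg => [|g gs IH] sg /=; first by rewrite inE => /eqP ->; left.
rewrite mem_cat => /orP [] /mapP [t ht ->]; case: ifP => _; auto.
Qed.

Lemma sigs_sum gs x (F : R -> R) c : uniq gs ->
  \sum_(sg <- sigs gs) F (c + \sum_(h <- gs) sg h * x h) = sgnsum F (map x gs) c.
Proof.
elim: gs c => [|g gs IH] c /=; first by rewrite big_seq1 big_nil addr0.
case/andP => ngs us; rewrite big_cat !big_map /= -!IH //.
congr (_ + _); apply: eq_bigr => t _; rewrite big_cons eqxx; congr F.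
  rewrite mul1r addrA; congr (_ + _); apply: eq_big_seq => h hh.
  by case: eqP => // E; rewrite -E hh in ngs.
rewrite mulN1r addrA; congr (_ + _); apply: eq_big_seq => h hh.
by case: eqP => // E; rewrite -E hh in ngs.
Qed.

Definition kk (gs : seq G) : R := ((2 : R) ^+ (size gs))^-1 / 2.

Lemma kk_gt0 gs : 0 < kk gs.
Proof. by rewrite /kk divr_gt0 // invr_gt0 exprn_gt0. Qed.

Definition rad (gs : seq G) : seq ((G -> R) -> R) :=
  [seq lin gs (fun h => kk gs * sg h) | sg <- sigs gs].

Lemma rad_dual gs phi : phi \in rad gs -> is_dual_lp p phi.
Proof. by case/mapP => sg _ ->; exact: lin_dual. Qed.

Lemma rad_sum gs x : uniq gs -> in_lp_ball p x ->
  \sum_(phi <- rad gs) `|phi x| <= 2^-1.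
Proof.
move=> us hx; rewrite big_map.
have -> : \sum_(sg <- sigs gs) `|lin gs (fun h => kk gs * sg h) x| =
          kk gs * sgnsum Num.norm (map x gs) 0.
  rewrite -sigs_sum // mulr_sumr; apply: eq_bigr => sg _.
  rewrite /lin asboolT; last exact: ball_lp.
  under eq_bigr => h _ do rewrite -mulrA.
  by rewrite add0r -mulr_sumr normrM gtr0_norm ?kk_gt0.
set S := sgnsum _ _ _.
have hS : S <= 2 ^+ size gs.
  rewrite -(@ler_pXn2r _ 2) // ?nnegrE ?sgnsum_abs_ge0 ?exprn_ge0 //.
  apply: (le_trans (sgnsum_abs_sq _ _)); rewrite sgnsum_sq size_map expr0n /= add0r big_map.
  rewrite mulrA -expr2.
  rewrite ler_piMr ?exprn_ge0 //; exact: ball_sq.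
rewrite /kk mulrAC ler_pdivrMr // ler_pdivrMl ?exprn_gt0 //.
by rewrite mulVf ?mulr1.
Qed.


Lemma lin_ev gs w h : uniq gs -> lin gs w (ev_e h) = if h \in gs then w h else 0.
Proof. by move=> us; rewrite /lin asboolT ?sum_ind //; exact: e_lp. Qed.

Lemma sum_const_seq (T : eqType) (xs : seq T) (c : R) :
  \sum_(u <- xs) c = c * (size xs)%:R.
Proof.
elim: xs => [|y xs IH]; first by rewrite big_nil mulr0.
by rewrite big_cons IH /= -add1n natrD mulrDr mulr1.
Qed.

Lemma Tm_rad gs a L sg : uniq gs -> l1b a L -> sg \in sigs gs ->
  Tm a (lin gs (fun h => kk gs * sg h)) = kk gs * \sum_(h <- gs) a h.
Proof.
move=> us ha hsg; rewrite /Tm asboolT; last exact: lin_dual.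
have -> : (fun g => a g * Num.sg (lin gs (fun h => kk gs * sg h) (ev_e g))) =
          (fun g => a g * Num.sg (if g \in gs then kk gs * sg g else 0)).
  by apply/funext => g; rewrite lin_ev.
rewrite /lin asboolT; last first.
  apply: (@l1b_lp _ L); apply: l1b_mul => // g; exact: norm_sg_le1.
rewrite mulr_sumr; apply: eq_big_seq => h hh; rewrite hh sgrM gtr0_sg ?kk_gt0 //.
have [->|->] := @sigs_pm gs sg h hsg; rewrite ?sgr1 ?sgrN1; ring.
Qed.

Lemma lower a L s : l1b a L -> uniq s -> exists xs, admissible p xs /\
  \sum_(phi <- xs) `|Tm a phi| = 2^-1 * \sum_(g <- s) `|a g|.
Proof.
move=> ha us.
pose J1 := [seq g <- s | 0 <= a g]; pose J2 := [seq g <- s | ~~ (0 <= a g)].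
have u1 : uniq J1 by rewrite filter_uniq.
have u2 : uniq J2 by rewrite filter_uniq.
have val : forall J, uniq J ->
    \sum_(phi <- rad J) `|Tm a phi| = 2^-1 * `|\sum_(h <- J) a h|.
  move=> J uJ; rewrite big_map.
  rewrite (eq_big_seq (fun _ => kk J * `|\sum_(h <- J) a h|)); last first.
    by move=> sg hsg; rewrite (@Tm_rad J a L sg uJ ha hsg) normrM gtr0_norm ?kk_gt0.
  rewrite sum_const_seq size_sigs natrX /kk.
  field; exact: expf_neq0.
exists (rad J1 ++ rad J2); split.
  split.
    by move=> phi; rewrite mem_cat => /orP [] h; [exact: (@rad_dual J1) | exact: (@rad_dual J2)].
  move=> x hx; rewrite big_cat /=.
  have := @rad_sum J1 x u1 hx; have := @rad_sum J2 x u2 hx; lra.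
rewrite big_cat /= !val // -mulrDr; congr (_ * _).
rewrite [in RHS](bigID (fun g => 0 <= a g)) /= /J1 /J2 !big_filter.
congr (_ + _).
  rewrite ger0_norm; last by rewrite big_seq_cond sumr_ge0 // => g /andP [].
  by apply: eq_bigr => g hg; rewrite ger0_norm.
rewrite ler0_norm; last first.
  rewrite big_seq_cond sumr_le0 // => g /andP [_ hg]; by apply: ltW; rewrite ltNge.
by rewrite -sumrN; apply: eq_bigr => g hg; rewrite ltr0_norm // ltNge.
Qed.

Definition approx a (s : seq G) : ((G -> R) -> R) -> R := fun phi =>
  \sum_(h <- s) a h * Num.max (delta (ev_e h) phi) ((-1) * delta (ev_e h) phi).

Lemma approx_abs a s phi : approx a s phi = \sum_(h <- s) a h * `|phi (ev_e h)|.
Proof. by apply: eq_bigr => h _; rewrite mulN1r maxrN. Qed.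

Lemma l1_fin a : in_l1 a -> exists L, l1_norm a = L%:E /\ l1b a L.
Proof.
move=> ha.
have h0 : (0%:E <= l1_norm a)%E.
  by apply: ereal_sup_ubound; exists [::] => //; rewrite big_nil.
have fin : l1_norm a \is a fin_num by rewrite ge0_fin_numE.
exists (fine (l1_norm a)); split; first by rewrite fineK.
move=> s us; rewrite -lee_fin fineK //.
by apply: ereal_sup_ubound; exists s.
Qed.

Lemma fbl_le a L : l1b a L -> (fbl_norm p (Tm a) <= L%:E)%E.
Proof.
move=> ha; apply: ge_ereal_sup => _ [xs hxs <-]; rewrite lee_fin.
exact: Tm_upper.
Qed.


Lemma main_result :
  exists T : (G -> R) -> (((G -> R) -> R) -> R),
    [/\ (forall a, in_l1 a -> FBL p (T a)),
        (forall a b, in_l1 a -> in_l1 b ->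
           T (fun g => a g + b g) = (fun phi => T a phi + T b phi)),
        (forall (c : R) a, in_l1 a -> T (fun g => c * a g) = (fun phi => c * T a phi)) &
        (exists c C : R, [/\ 0 < c, 0 < C &
           forall a, in_l1 a ->
             (c%:E * l1_norm a <= fbl_norm p (T a))%E /\
             (fbl_norm p (T a) <= C%:E * l1_norm a)%E])].
Proof.
exists Tm; split.
- move=> a /l1_fin [L [hL ha]] S [hH0 [hdel hadd hsc hmax hcl]].
  apply: hcl.
    split; last by rewrite (le_lt_trans (@fbl_le a L ha)) ?ltry.
    move=> phi hphi l l0; rewrite /Tm asboolT ?asboolT //; last exact: dual_scale.
    have -> : (fun g => a g * Num.sg (l * phi (ev_e g))) = (fun g => a g * Num.sg (phi (ev_e g))).
      by apply/funext => g; rewrite sgrM gtr0_sg // mul1r.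
    by [].
  move=> e e0; have [s us ht] := @tail_small a L e ha e0.
  exists (approx a s); split.
    rewrite /approx; elim: (s) => [|h s' IH].
      have -> : (fun phi : (G -> R) -> R =>
          \sum_(h <- [::]) a h * Num.max (delta (ev_e h) phi) (-1 * delta (ev_e h) phi)) =
          (fun phi => 0 * delta (fun _ => 0) phi).
        by apply/funext => phi; rewrite big_nil mul0r.
      by apply: (hsc); apply: (hdel); exact: lp0.
    have -> : (fun phi : (G -> R) -> R =>
          \sum_(k <- h :: s') a k * Num.max (delta (ev_e k) phi) (-1 * delta (ev_e k) phi)) =
          (fun phi => a h * Num.max (delta (ev_e h) phi) (-1 * delta (ev_e h) phi) +
             \sum_(k <- s') a k * Num.max (delta (ev_e k) phi) (-1 * delta (ev_e k) phi)).
      by apply/funext => phi; rewrite big_cons.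
    apply: (hadd) => //; apply: (hsc); apply: (hmax); first by apply: (hdel); exact: e_lp.
    by apply: (hsc); apply: (hdel); exact: e_lp.
  apply: ge_ereal_sup => _ [xs hxs <-]; rewrite lee_fin.
  rewrite (eq_big_seq (fun phi => `|Tm (tail s a) phi|)).
    exact: Tm_upper.
  move=> phi hphi; have hd := hxs.1 _ hphi.
  by rewrite approx_abs (@Tm_decomp phi a L s hd ha us) addrC addKr.
- move=> a b /l1_fin [La [_ ha]] /l1_fin [Lb [_ hb]]; apply/funext => phi.
  rewrite /Tm; case: asboolP => hd; last by rewrite addr0.
  have [hadd _ _ _] := hd.
  rewrite -hadd; first by congr phi; apply/funext => g; rewrite mulrDl.
    by apply: (@l1b_lp _ La); apply: l1b_mul => // g; exact: norm_sg_le1.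
  by apply: (@l1b_lp _ Lb); apply: l1b_mul => // g; exact: norm_sg_le1.
- move=> c a /l1_fin [La [_ ha]]; apply/funext => phi.
  rewrite /Tm; case: asboolP => hd; last by rewrite mulr0.
  have [_ hsc _ _] := hd.
  rewrite -hsc; first by congr phi; apply/funext => g; rewrite mulrA.
  by apply: (@l1b_lp _ La); apply: l1b_mul => // g; exact: norm_sg_le1.
exists 2^-1, 1; split; [by rewrite invr_gt0 | by [] | ].
move=> a /l1_fin [L [hL ha]]; rewrite hL mul1e; split; last exact: fbl_le.
have hup := @fbl_le a L ha.
have hlow : forall s, uniq s -> ((2^-1 * \sum_(g <- s) `|a g|)%:E <= fbl_norm p (Tm a))%E.
  move=> s us; have [xs [hxs <-]] := @lower a L s ha us.
  by apply: ereal_sup_ubound; exists xs.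
have h0 : (0%:E <= fbl_norm p (Tm a))%E.
  by apply: le_trans (hlow [::] isT); rewrite big_nil mulr0.
have fin : fbl_norm p (Tm a) \is a fin_num.
  by rewrite ge0_fin_numE // (le_lt_trans hup) ?ltry.
rewrite -(fineK fin) -EFinM lee_fin.
have : (l1_norm a <= (2 * fine (fbl_norm p (Tm a)))%:E)%E.
  apply: ge_ereal_sup => _ [s us <-]; rewrite lee_fin.
  have := hlow s us; rewrite -(fineK fin) lee_fin; lra.
rewrite hL lee_fin; lra.
Qed.

End Aux.

Theorem theorem5p4 (R : realType) (G : choiceType) (g0 : G) (p : R)
    (hp1 : 1 < p) (hp2 : p <= 2) :
  exists T : (G -> R) -> (((G -> R) -> R) -> R),
    [/\ (forall a, in_l1 a -> FBL p (T a)),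
        (forall a b, in_l1 a -> in_l1 b ->
           T (fun g => a g + b g) = (fun phi => T a phi + T b phi)),
        (forall (c : R) a, in_l1 a -> T (fun g => c * a g) = (fun phi => c * T a phi)) &
        (exists c C : R, [/\ 0 < c, 0 < C &
           forall a, in_l1 a ->
             (c%:E * l1_norm a <= fbl_norm p (T a))%E /\
             (fbl_norm p (T a) <= C%:E * l1_norm a)%E])].
Proof. exact: (@main_result R G p hp1 hp2). Qed.
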